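(* Let $p^*\in(0,1)$ be the solution of $p^{(2-p)/(1-p)}=(1-p)^2$ ($p^*\approx0.594$). For every $p\in[p^*,1)$ and every integer $\ell\ge0$, \[ \int_{p^{1/(1-p)}}^1\frac{(1-t)^\ell}{t^p}\,dt\ \ge\ (1-p)^\ell . \] *)

(* Defs.v *)
From Stdlib Require Import Reals.
From Coquelicot Require Import Coquelicot.
Open Scope R_scope.

Definition pstar_eq (p : R) : Prop :=
  Rpower p ((2 - p) / (1 - p)) = (1 - p) ^ 2.

(* Main.v *)
Require Import Defs.
From Stdlib Require Import Reals Lra.
From Coquelicot Require Import Coquelicot.
Open Scope R_scope.

Lemma tangent_S (m : nat) (x c : R) : 0 <= x -> 0 <= c ->
  c ^ (S m) + INR (S m) * c ^ m * (x - c) <= x ^ (S m).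
Proof.
  intros Hx Hc. induction m as [|m IH].
  - simpl. lra.
  - assert (HP : 0 <= c ^ m) by (apply pow_le; lra).
    assert (HK : 0 <= INR (S m)) by apply pos_INR.
    assert (H1 : 0 <= INR (S m) * c ^ m * ((x - c) * (x - c))).
    { apply Rmult_le_pos. apply Rmult_le_pos; lra. apply Rle_0_sqr. }
    assert (H2 : x * (c ^ S m + INR (S m) * c ^ m * (x - c)) <= x * x ^ S m)
      by (apply Rmult_le_compat_l; lra).
    replace (x ^ S (S m)) with (x * x ^ S m) by (simpl; ring).
    replace (c ^ S (S m)) with (c * c ^ S m) by (simpl; ring).
    rewrite S_INR. simpl pow in *. nra.
Qed.

Lemma tangent (n : nat) (x c : R) : 0 <= x -> 0 <= c ->
  c ^ n + INR n * c ^ (pred n) * (x - c) <= x ^ n.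
Proof.
  intros Hx Hc. destruct n as [|m].
  - simpl. lra.
  - apply tangent_S; auto.
Qed.

Lemma cont_f (p t : R) (l : nat) : 0 < t ->
  continuous (fun t => (1 - t) ^ l / Rpower t p) t.
Proof.
  intros Ht. apply (@ex_derive_continuous R_AbsRing). unfold Rpower. auto_derive.
  split. lra. split. apply Rgt_not_eq, exp_pos. easy.
Qed.

Definition phi (x : R) := (2 - x) / (1 - x) * ln x - 2 * ln (1 - x).

Lemma phi_incr (x y : R) : 0 < x -> x < y -> y < 1 -> phi x < phi y.
Proof.
  intros Hx Hxy Hy.
  apply (incr_function phi (Finite 0) (Finite 1)
    (fun x => (x * ln x + (2 - x) * (1 - x) + 2 * x * (1 - x)) / ((1 - x) * (1 - x) * x)));
    simpl; try lra.
  - intros z Hz0 Hz1. unfold phi. auto_derive.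
    + repeat split; lra.
    + field. lra.
  - intros z Hz0 Hz1.
    assert (Hl : - ln z <= / z - 1).
    { rewrite <- ln_Rinv by lra.
      pose proof (exp_ineq1_le (ln (/ z))) as H. rewrite exp_ln in H.
      lra. apply Rinv_0_lt_compat; lra. }
    assert (Hzl : z * ln z >= z - 1).
    { assert (z * (- ln z) <= z * (/ z - 1)) by (apply Rmult_le_compat_l; lra).
      replace (z * (/ z - 1)) with (1 - z) in H by (field; lra). lra. }
    apply Rdiv_lt_0_compat.
    + nra.
    + apply Rmult_lt_0_compat; [apply Rmult_lt_0_compat|]; lra.
Qed.

Theorem lemma4 (pstar : R) (Hps : 0 < pstar < 1) (Heq : pstar_eq pstar)
  (p : R) (Hp : pstar <= p < 1) (l : nat) :
  RInt (fun t => (1 - t) ^ l / Rpower t p) (Rpower p (1 / (1 - p))) 1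
    >= (1 - p) ^ l.
Proof.
  assert (Hp0 : 0 < p) by lra.
  assert (Hphis : phi pstar = 0).
  { unfold pstar_eq in Heq. unfold phi.
    apply (f_equal ln) in Heq. rewrite ln_Rpower in Heq.
    rewrite ln_pow in Heq by lra. simpl INR in Heq.
    unfold Rdiv in *. lra. }
  assert (Hphi : 0 <= phi p).
  { destruct (Req_dec pstar p) as [E|E].
    - subst. lra.
    - pose proof (phi_incr pstar p ltac:(lra) ltac:(lra) ltac:(lra)). lra. }
  set (a := Rpower p (1 / (1 - p))).
  set (c := 1 - p).
  assert (Ha0 : 0 < a) by (unfold a, Rpower; apply exp_pos).
  assert (Hlnp : ln p < 0) by (rewrite <- ln_1; apply ln_increasing; lra).
  assert (Ha1 : a < 1).
  { unfold a, Rpower. apply Rlt_le_trans with (exp 0); [|rewrite exp_0; lra]. apply exp_increasing.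
    assert (0 < 1 / (1 - p)) by (apply Rdiv_lt_0_compat; lra). assert (0 < 1 / (1 - p) * - ln p) by (apply Rmult_lt_0_compat; lra). replace (1 / (1 - p) * ln p) with (- (1 / (1 - p) * - ln p)) by ring. lra. }
  assert (Hap : Rpower a (1 - p) = p).
  { unfold a. rewrite Rpower_mult.
    replace (1 / (1 - p) * (1 - p)) with 1 by (field; lra).
    apply Rpower_1; lra. }
  assert (Hap' : Rpower a p = a / p).
  { assert (E : Rpower a (1 - p) = a / Rpower a p).
    { replace (1 - p) with (1 + - p) by ring. rewrite Rpower_plus, Rpower_Ropp, Rpower_1 by lra.
      reflexivity. }
    rewrite Hap in E.
    assert (0 < Rpower a p) by (unfold Rpower; apply exp_pos).
    set (u := Rpower a p) in *. clearbody u.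
    assert (Hu : p * u = a) by (rewrite E; field; lra).
    rewrite <- Hu. field. lra. }
  assert (Hpa : (1 - p) ^ 2 <= p * a).
  { assert (E1 : p * a = exp ((2 - p) / (1 - p) * ln p)).
    { unfold a. rewrite <- (Rpower_1 p) at 1 by lra. rewrite <- Rpower_plus.
      unfold Rpower. f_equal. f_equal. field. lra. }
    assert (E2 : (1 - p) ^ 2 = exp (2 * ln (1 - p))).
    { rewrite <- (exp_ln ((1 - p) ^ 2)) by (apply pow_lt; lra).
      rewrite ln_pow by lra. simpl INR. f_equal. }
    rewrite E1, E2. unfold phi in Hphi.
    destruct (Rle_lt_or_eq_dec _ _ Hphi) as [H|H].
    - left. apply exp_increasing. lra.
    - right. f_equal. lra. }
  set (B := INR l * c ^ (pred l)).
  set (A := c ^ l - B * c).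
  set (L := fun t => (A + B * (1 - t)) / Rpower t p).
  set (G := fun t => ((A + B) / (1 - p) * t - B / (2 - p) * t * t) / Rpower t p).
  assert (HcB : 0 <= B).
  { unfold B. apply Rmult_le_pos. apply pos_INR. apply pow_le. unfold c; lra. }
  assert (HI : is_RInt L a 1 (minus (G 1) (G a))).
  { apply (@is_RInt_derive R_CompleteNormedModule G L).
    - intros x Hx. rewrite Rmin_left in Hx by lra.
      unfold G, L, Rpower. auto_derive.
      + repeat split; try lra. apply Rgt_not_eq, exp_pos.
      + assert (exp (p * ln x) <> 0) by apply Rgt_not_eq, exp_pos.
        field. repeat split; lra.
    - intros x Hx. rewrite Rmin_left in Hx by lra.
      apply (@ex_derive_continuous R_AbsRing). unfold L, Rpower. auto_derive.
      repeat split; try lra. apply Rgt_not_eq, exp_pos. }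
  assert (HG : minus (G 1) (G a) = A + B - B * (1 - p * a) / (2 - p)).
  { unfold minus, plus, opp; simpl. unfold G. rewrite Hap'.
    assert (E : Rpower 1 p = 1) by (unfold Rpower; rewrite ln_1, Rmult_0_r; apply exp_0).
    rewrite E. field. repeat split; lra. }
  assert (Hle : RInt L a 1 <= RInt (fun t => (1 - t) ^ l / Rpower t p) a 1).
  { apply RInt_le.
    - lra.
    - eexists; exact HI.
    - apply (@ex_RInt_continuous R_CompleteNormedModule). intros z Hz. rewrite Rmin_left in Hz by lra.
      apply cont_f; lra.
    - intros x Hx. unfold L. unfold Rdiv. apply Rmult_le_compat_r.
      + left. apply Rinv_0_lt_compat. unfold Rpower; apply exp_pos.
      + pose proof (tangent l (1 - x) c ltac:(lra) ltac:(unfold c; lra)).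
        unfold A, B. lra. }
  rewrite (is_RInt_unique _ _ _ _ HI), HG in Hle.
  fold a. apply Rle_ge. eapply Rle_trans; [|exact Hle].
  assert (Hk : (1 - p * a) / (2 - p) <= p).
  { apply (Rmult_le_reg_r (2 - p)). lra. unfold Rdiv.
    rewrite Rmult_assoc, Rinv_l by lra. nra. }
  assert (B * ((1 - p * a) / (2 - p)) <= B * p) by (apply Rmult_le_compat_l; lra).
  unfold A. unfold c in *. unfold Rdiv in *. lra.
Qed.
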